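(* Let $X$ be a finite set, $k$ an integer with $1\le k\le|X|-1$, $\mathfrak{C}$ a nonempty symmetric family of choice functions for $\binom{X}{k}$, and $\mathcal{F}$ the set of (not necessarily simple) averaging functions for $\mathfrak{C}$, with $r(\mathcal{F})=2$. Assume that for every $Y\in\binom{X}{k}$ and all $a_1\ne a_2$ in $Y$ there is $f\in\mathcal{F}_{[2]}$ with $f_Y(a_1,a_2)=a_2$ and $f_Z(b_1,b_2)=b_1$ for all $Z\in\binom{X}{k}$ with $Z\ne Y$ and all $b_1,b_2\in Z$. Then $\mathfrak{C}$ is full, i.e. every choice function for $\binom{X}{k}$ belongs to $\mathfrak{C}$.
   Context: $\binom{X}{k}=\{Y\subseteq X:|Y|=k\}$; choice functions satisfy $c(Y)\in Y$. Symmetric: for every permutation $\pi$ of $X$ and $c\in\mathfrak{C}$, $(\pi*c)(Y)=\pi^{-1}(c(\pi(Y)))$ is in $\mathfrak{C}$. $\mathcal{F}_{[r]}$ is the set of families $f=\langle f_Y:Y\in\binom{X}{k}\rangle$ with $f_Y:Y^r\to Y$, $f_Y(x_1,\dots,x_r)\in\{x_1,\dots,x_r\}$, such that for all $c_1,\dots,c_r\in\mathfrak{C}$, $Y\mapsto f_Y(c_1(Y),\dots,c_r(Y))$ is in $\mathfrak{C}$; $\mathcal{F}=\bigcup_r\mathcal{F}_{[r]}$. $f\in\mathcal{F}_{[r]}$ is a monarchy if for some $t$, $f_Y(\bar x)=x_t$ for all $Y$ and $\bar x\in Y^r$. $r(\mathcal{F})=\min\{r\ge2:\text{some } f\in\mathcal{F}_{[r]}\text{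 is not a monarchy}\}$. Standing assumption: every simple $f\in\mathcal{F}$ (one with $f_Y$ the restriction of a single function independent of $Y$) is a monarchy. *)

(* Defs.v *)
From mathcomp Require Import all_boot all_order all_fingroup.
Set Implicit Arguments. Unset Strict Implicit. Unset Printing Implicit Defensive.

Notation ksub X k := {Y : {set X} | #|Y| == k}.

Section Defs.
Variables (X : finType) (k : nat).

Definition is_choice (c : {ffun ksub X k -> X}) : Prop :=
  forall Y : ksub X k, c Y \in val Y.

Lemma kact_proof (p : {perm X}) (Y : ksub X k) : #|p @: val Y| == k.
Proof. by rewrite card_imset; [exact: (valP Y) | exact: perm_inj]. Qed.

Definition kact (p : {perm X}) (Y : ksub X k) : ksub X k :=
  exist (fun Z : {set X} => #|Z| == k) (p @: val Y) (kact_proof p Y).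

Definition perm_choice (p : {perm X}) (c : {ffun ksub X k -> X}) :
  {ffun ksub X k -> X} := [ffun Y => (p^-1)%g (c (kact p Y))].

Definition symmetric_family (C : {set {ffun ksub X k -> X}}) : Prop :=
  forall (p : {perm X}) c, c \in C -> perm_choice p c \in C.

(* A family f = <f_Y> with f_Y : Y^r -> Y; only the values on Y^r matter. *)
Definition in_power (r : nat) (Y : ksub X k) (x : r.-tuple X) : bool :=
  all (fun a => a \in val Y) x.

Definition averaging (C : {set {ffun ksub X k -> X}}) (r : nat)
    (f : ksub X k -> r.-tuple X -> X) : Prop :=
  (forall Y x, in_power Y x -> f Y x \in (x : seq X)) /\
  (forall cs : r.-tuple {ffun ksub X k -> X},
     (forall i : 'I_r, tnth cs i \in C) ->
     [ffun Y => f Y [tuple tnth cs i Y | i < r]] \in C).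

Definition monarchy (r : nat) (f : ksub X k -> r.-tuple X -> X) : Prop :=
  exists t : 'I_r, forall Y x, in_power Y x -> f Y x = tnth x t.

Definition simple (r : nat) (f : ksub X k -> r.-tuple X -> X) : Prop :=
  exists g : r.-tuple X -> X, forall Y x, in_power Y x -> f Y x = g x.

Definition rF_is (C : {set {ffun ksub X k -> X}}) (r : nat) : Prop :=
  [/\ 2 <= r,
      exists f : ksub X k -> r.-tuple X -> X, averaging C f /\ ~ monarchy f &
      forall r', 2 <= r' < r -> forall f : ksub X k -> r'.-tuple X -> X,
        averaging C f -> monarchy f].

Definition full (C : {set {ffun ksub X k -> X}}) : Prop :=
  forall c, is_choice c -> c \in C.

End Defs.

(* Main.v *)
Require Import Defs.
From mathcomp Require Import all_boot all_order all_fingroup.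

Lemma hit (X : finType) (k : nat) (C : {set {ffun ksub X k -> X}})
  (Hchoice : forall c, c \in C -> is_choice c)
  (Hsym : symmetric_family C) (c0 : {ffun ksub X k -> X}) (Hc0 : c0 \in C)
  (Y : ksub X k) (a : X) (Ha : a \in val Y) :
  exists2 c, c \in C & c Y = a.
Proof.
set b := c0 Y.
have Hb : b \in val Y by exact: Hchoice.
exists (perm_choice (tperm a b) c0); first exact: Hsym.
have HY : kact (tperm a b) Y = Y.
  apply: val_inj => /=; apply: im_perm_on.
  apply: subset_trans (tperm_on a b) _.
  by apply/subsetP => z; rewrite !inE => /orP [] /eqP ->.
by rewrite /perm_choice ffunE HY tpermV tpermR.
Qed.

Theorem claim14p20 (X : finType) (k : nat)
  (C : {set {ffun ksub X k -> X}})
  (hk : 1 <= k <= #|X| - 1)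
  (Hchoice : forall c, c \in C -> is_choice c)
  (Hne : C != set0)
  (Hsym : symmetric_family C)
  (Hstanding : forall (r : nat) (f : ksub X k -> r.-tuple X -> X),
      averaging C f -> simple f -> monarchy f)
  (Hr : rF_is C 2)
  (Hsep : forall (Y : ksub X k) (a1 a2 : X),
      a1 \in val Y -> a2 \in val Y -> a1 != a2 ->
      exists f : ksub X k -> 2.-tuple X -> X,
        [/\ averaging C f,
            f Y [tuple a1; a2] = a2 &
            forall Z : ksub X k, Z != Y -> forall b1 b2 : X,
              b1 \in val Z -> b2 \in val Z -> f Z [tuple b1; b2] = b1]) :
  full C.
Proof.
move=> cs Hcs.
have [c0 Hc0] := set0Pn _ Hne.
suff: forall s : seq (ksub X k), exists2 c, c \in C & forall Y, Y \in s -> c Y = cs Y.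
  case/(_ (enum [set: ksub X k])) => c Hc Heq.
  suff -> : cs = c by [].
  by apply/ffunP => Y; rewrite Heq // mem_enum inE.
elim=> [|Y s [c Hc Heq]]; first by exists c0.
have [c2 Hc2 Hc2Y] := @hit _ _ _ Hchoice Hsym _ Hc0 _ _ (Hcs Y).
have [E|NE] := eqVneq (c Y) (cs Y).
  exists c => // Z; rewrite inE => /orP [/eqP -> //|]; exact: Heq.
have [f [[_ Hf] HfY HfZ]] := Hsep Y (c Y) (cs Y) (Hchoice _ Hc Y) (Hcs Y) NE.
have Ht : forall Z, [tuple tnth [tuple c; c2] i Z | i < 2] = [tuple c Z; c2 Z].
  move=> Z; apply: eq_from_tnth => i; rewrite tnth_mktuple.
  by case: i => [[|[|]]] //.
exists [ffun Z => f Z [tuple c Z; c2 Z]].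
  have := Hf [tuple c; c2].
  have -> : [ffun Y => f Y [tuple tnth [tuple c; c2] i Y | i < 2]] =
            [ffun Z => f Z [tuple c Z; c2 Z]].
    by apply/ffunP => Z; rewrite !ffunE Ht.
  apply => i; case: i => [[|[|]]] //= _.
move=> Z; rewrite inE ffunE.
have [-> _|NZ /= HZ] := eqVneq Z Y; first by rewrite Hc2Y HfY.
rewrite HfZ //; [exact: Heq | exact: Hchoice | exact: Hchoice].
Qed.
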